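(* Let $k\ge1$ and let $\mathcal{C}$ be a multiset of non-zero residues modulo $2^{k+1}$ such that no sub-collection of $\mathcal{C}$ sums to $2^k$ modulo $2^{k+1}$. Let $T_1(\mathcal{C})$, $T_2(\mathcal{C})$, $T_3(\mathcal{C})$ denote the results of applying a type 1, type 2, type 3 compression to $\mathcal{C}$ respectively (whenever such a compression is possible). Then $T_1(\mathcal{C})^*=\mathcal{C}^*$, $T_2(\mathcal{C})^*\subseteq\mathcal{C}^*$ and $T_3(\mathcal{C})^*\subseteq\mathcal{C}^*$. Moreover, if $T_2(\mathcal{C})$ or $T_3(\mathcal{C})$ contains $m$ pairwise disjoint non-empty sub-collections each summing to $0$ modulo $2^{k+1}$, then so does $\mathcal{C}$. Finally, if $T_1(\mathcal{C},t)$ denotes the result of a type 1 compression replacing the element $t$, and $T_1(\mathcal{C},t)$ contains $m+|t|-1$ pairwise disjoint non-empty sub-collections each summing to $0$ modulo $2^{k+1}$, then $\mathcal{C}$ contains at least $m$ such sub-collections.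
   Context: Multisets are called collections; disjoint sub-collections use disjoint occurrences of elements. For a multiset $\mathcal{D}=\{a_1,\dots,a_d\}$ of residues modulo $2^{k+1}$, the iterated sumset is the set $\mathcal{D}^*=\{\sum_{i\in I}a_i \bmod 2^{k+1}: I\subseteq[d]\}$ (including the empty sum $0$). For a residue $t$ modulo $2^{k+1}$, $|t|$ denotes the minimal absolute value of an integer in the residue class of $t$. Compressions (for $\mathcal{C}$ as in the claim): Type 1: if $\mathcal{C}$ contains at least $\lambda>0$ elements each equal to $1$ or $-1$ and also an element $t$ with $1<|t|\le\lambda+1$, replace $t$ by $|t|$ copies of $1$ if $t\in[1,2^k-1]$ and by $|t|$ copies of $-1$ otherwise. Type 2: if $\mathcal{C}$ contains an element $-t$ and two copies of $2^k-t$, replace the two copies of $2^k-t$ by two copies of $-t$. Type 3: if $\mathcal{C}$ contains at least $2^{k-1}$ elements each equal to $\pm1$ and two elements $u,v$ lying in the range $[(3/2)2^{k-1},2^k-1]$, replace $u$ and $v$ by $u-2^k$ and $v-2^k$. *)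

(* Defs.v *)
(* Residues modulo 2^(k+1) are elements of 'Z_(2 ^ k.+1)
   (a genuine ring since k >= 1 gives modulus >= 4).  Multisets
   ("collections") are sequences, considered up to permutation; a
   sub-collection is a set of indices (positions) of the sequence, so
   disjoint sub-collections use disjoint occurrences. *)
From mathcomp Require Import all_boot all_order all_algebra.
Set Implicit Arguments. Unset Strict Implicit. Unset Printing Implicit Defensive.
Import Order.TTheory GRing.Theory Num.Theory.
Local Open Scope ring_scope.

Notation Res k := 'Z_(2 ^ k.+1).

Definition twok (k : nat) : Res k := (2 ^ k)%N%:R.

Definition absR (k : nat) (t : Res k) : nat :=
  minn (val t) (2 ^ k.+1 - val t)%N.

Definition sub_sum (k : nat) (C : seq (Res k)) (I : {set 'I_(size C)}) : Res k :=
  \sum_(i in I) nth 0 C i.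

(* the iterated sumset C^* (includes the empty sum 0) *)
Definition sumset (k : nat) (C : seq (Res k)) : {set Res k} :=
  [set sub_sum I | I : {set 'I_(size C)}].

Definition has_zero_sums (k : nat) (C : seq (Res k)) (m : nat) : Prop :=
  exists F : 'I_m -> {set 'I_(size C)},
    (forall i, F i != set0 /\ sub_sum (F i) = 0) /\
    (forall i j, i != j -> [disjoint F i & F j]).

Definition is_pm1 (k : nat) (x : Res k) : bool := (x == 1) || (x == -1).

Definition compress1 (k : nat) (C : seq (Res k)) (t : Res k) (C' : seq (Res k)) : Prop :=
  exists lam : nat, [/\ (0 < lam)%N /\ (lam <= count (@is_pm1 k) C)%N,
    t \in C, (1 < absR t)%N, (absR t <= lam + 1)%N &
    perm_eq C' (rem t C ++
      nseq (absR t) (if (1 <= val t < 2 ^ k)%N then 1 else -1))].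

Definition compress2 (k : nat) (C : seq (Res k)) (C' : seq (Res k)) : Prop :=
  exists t : Res k, [/\ - t \in C, (2 <= count_mem (twok k - t)%R C)%N &
    perm_eq C' (rem (twok k - t) (rem (twok k - t) C) ++ [:: - t; - t])].

Definition in_range3 (k : nat) (u : Res k) : bool :=
  (3 * 2 ^ k.-1 <= 2 * val u)%N && (val u <= 2 ^ k - 1)%N.

(* type 3 compression (u, v are two distinct occurrences) *)
Definition compress3 (k : nat) (C : seq (Res k)) (C' : seq (Res k)) : Prop :=
  exists u v : Res k, [/\ (2 ^ k.-1 <= count (@is_pm1 k) C)%N,
    u \in C /\ v \in rem u C, in_range3 u, in_range3 v &
    perm_eq C' (rem v (rem u C) ++ [:: u - twok k; v - twok k])].

(* Main.v *)
Require Import Defs.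
From mathcomp Require Import all_boot all_order all_algebra zify.
Set Implicit Arguments. Unset Strict Implicit. Unset Printing Implicit Defensive.
Import Order.TTheory GRing.Theory Num.Theory.
Local Open Scope ring_scope.

Definition lsum {V : zmodType} (S : seq V) : V := \sum_(z <- S) z.
Definition okc {V : zmodType} (S : seq V) : bool := (S != [::]) && (lsum S == 0).
Definition SS {V : zmodType} (C : seq V) (x : V) : Prop :=
  exists S T, perm_eq C (S ++ T) /\ x = lsum S.
Definition ZS {V : zmodType} (C : seq V) (m : nat) : Prop :=
  exists Ss T, [/\ size Ss = m, all okc Ss & perm_eq C (flatten Ss ++ T)].

Ltac perm_tac := let p := fresh "p" in apply/permP => p;
  repeat match goal with H : is_true (perm_eq _ _) |- _ => move: (permP H p); clear H end;
  rewrite /= ?flatten_cat /= ?count_cat /= ?flatten_cat /= ?count_cat /=; lia.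

Lemma lsum_cons {V : zmodType} (x : V) S : lsum (x :: S) = x + lsum S.
Proof. by rewrite /lsum big_cons. Qed.
Lemma lsum_cat {V : zmodType} (S T : seq V) : lsum (S ++ T) = lsum S + lsum T.
Proof. by rewrite /lsum big_cat. Qed.
Lemma lsum_nil {V : zmodType} : lsum ([::] : seq V) = 0.
Proof. by rewrite /lsum big_nil. Qed.
Lemma lsum_perm {V : zmodType} (S T : seq V) : perm_eq S T -> lsum S = lsum T.
Proof. exact: perm_big. Qed.
Lemma okc_perm {V : zmodType} (S T : seq V) : perm_eq S T -> okc S = okc T.
Proof.
move=> h; rewrite /okc (lsum_perm h); congr (_ && _).
by rewrite -!size_eq0 (perm_size h).
Qed.

Lemma SS_perm {V : zmodType} (C C' : seq V) x : perm_eq C C' -> SS C x -> SS C' x.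
Proof.
move=> h [S [T [h1 ->]]]; exists S, T; split => //.
by rewrite perm_sym (perm_trans _ h) // perm_sym.
Qed.

Lemma SS_nil {V : zmodType} (x : V) : SS [::] x <-> x = 0.
Proof.
split.
  move=> [S [T [h ->]]]; move: (perm_size h); rewrite size_cat /=.
  by case: S {h} => // _; rewrite lsum_nil.
by move=> ->; exists [::], [::]; rewrite lsum_nil.
Qed.

Lemma SS_cons {V : zmodType} (z : V) L x : SS (z :: L) x <-> SS L x \/ SS L (x - z).
Proof.
split.
  move=> [S [T [h ->]]].
  have : z \in S ++ T by rewrite -(perm_mem h) mem_head.
  rewrite mem_cat => /orP [] hz.
    case/splitPr: hz h => S1 S2 h; right; exists (S1 ++ S2), T; split.
      by perm_tac.
    by rewrite !lsum_cat lsum_cons addrCA addrAC subrr add0r.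
  case/splitPr: hz h => T1 T2 h; left; exists S, (T1 ++ T2); split => //.
  by perm_tac.
case=> [[S [T [h ->]]]|[S [T [h e]]]].
  by exists S, (z :: T); split => //; perm_tac.
exists (z :: S), T; split; first by perm_tac.
by rewrite lsum_cons -e addrC subrK.
Qed.

Lemma SS_nseq_cat {V : zmodType} (z : V) n L x :
  SS (nseq n z ++ L) x <-> exists2 i, (i <= n)%N & SS L (x - z *+ i).
Proof.
elim: n x => [|n IH] x /=.
  split; first by move=> h; exists 0%N => //; rewrite subr0.
  by case=> i; rewrite leqn0 => /eqP -> ; rewrite subr0.
rewrite SS_cons IH IH; split.
  case=> [[i hi h]|[i hi h]].
    by exists i => //; apply: leqW.
  by exists i.+1 => //; rewrite mulrS opprD addrA.
case=> [[|i] hi h].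
  by left; exists 0%N.
by right; exists i => //; rewrite mulrS opprD addrA in h.
Qed.

Lemma ZS0 {V : zmodType} (C : seq V) : ZS C 0.
Proof. by exists [::], C; split. Qed.

Lemma ZS_perm {V : zmodType} (C C' : seq V) m : perm_eq C C' -> ZS C m -> ZS C' m.
Proof.
move=> h [Ss [T [h1 h2 h3]]]; exists Ss, T; split => //.
by rewrite perm_sym (perm_trans _ h) // perm_sym.
Qed.

Lemma locate {V : zmodType} (x : V) L Ss T : perm_eq (x :: L) (flatten Ss ++ T) ->
  (exists T', perm_eq L (flatten Ss ++ T')) \/
  (exists X X' Ss', [/\ perm_eq X (x :: X'), perm_eq Ss (X :: Ss') &
                        perm_eq L (X' ++ flatten Ss' ++ T)]).
Proof.
move=> h; have : x \in flatten Ss ++ T by rewrite -(perm_mem h) mem_head.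
rewrite mem_cat => /orP [].
  case/flattenP => X hX hx; right; exists X, (rem x X), (rem X Ss); split.
  - exact: perm_to_rem.
  - exact: perm_to_rem.
  have h1 := perm_flatten (perm_to_rem hX); have h2 := perm_to_rem hx.
  by perm_tac.
move=> hx; case/splitPr: hx h => T1 T2 h; left; exists (T1 ++ T2); by perm_tac.
Qed.

Lemma merge {V : zmodType} (x y : V) R m : ZS (x :: y :: R) m.+1 -> ZS ((x + y) :: R) m.
Proof.
case=> Ss [T [hs hok h]].
case: (locate h) => [[T' h1]|[X [X' [Ss' [hX hS h1]]]]].
- case: (locate h1) => [[T'' h2]|[Y [Y' [Ss' [hY hS h2]]]]].
  + case: Ss hs hok h h1 h2 => // S0 Ss0 [hs] /andP [_ hok] h h1 h2.
    exists Ss0, ((x+y) :: S0 ++ T''); split => //; by perm_tac.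
  + exists Ss', ((x+y) :: Y' ++ T'); split.
    * by move: (perm_size hS); rewrite hs /= => -[].
    * by move: hok; rewrite (perm_all _ hS) /= => /andP [].
    * by perm_tac.
have hsz : size Ss' = m by move: (perm_size hS); rewrite hs /= => -[].
have /andP [hokX hok'] : okc X && all okc Ss' by move: hok; rewrite (perm_all _ hS).
have h1' : perm_eq (y :: R) (flatten (X' :: Ss') ++ T) by rewrite /= -catA.
case: (locate h1') => [[T'' h2]|[Y [Y' [Ss'' [hY hS' h2]]]]].
  exists Ss', ((x+y) :: X' ++ T''); split => //; by perm_tac.
case: (eqVneq Y X') => [eYX|nYX].
  subst Y; move: hS'; rewrite perm_cons => hS'.
  exists Ss'', ((x+y) :: Y' ++ T); split.
  - by rewrite -(perm_size hS').
  - by rewrite -(perm_all _ hS').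
  - by perm_tac.
have : Y \in X' :: Ss' by rewrite (perm_mem hS') mem_head.
rewrite in_cons (negbTE nYX) /= => hYin.
have hr := perm_to_rem hYin.
have hS3 : perm_eq Ss'' (X' :: rem Y Ss').
  have e : perm_eq (Y :: Ss'') (Y :: X' :: rem Y Ss').
    rewrite perm_sym in hS'; apply: (perm_trans hS').
    by rewrite perm_sym (perm_catCA [:: Y] [:: X']) /= perm_cons perm_sym.
  by rewrite perm_cons in e.
have hF := perm_flatten hS3.
have /andP [hokY hokr] : okc Y && all okc (rem Y Ss') by move: hok'; rewrite (perm_all _ hr).
exists (((x + y) :: X' ++ Y') :: rem Y Ss'), T; split.
- by move: (perm_size hr); rewrite hsz /= => ->.
- rewrite /= hokr andbT /okc /= lsum_cons lsum_cat.
  move: hokX hokY; rewrite /okc (lsum_perm hX) (lsum_perm hY) !lsum_cons.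
  move=> /andP [_ /eqP e1] /andP [_ /eqP e2].
  by rewrite addrACA addrA e1 add0r e2.
- by perm_tac.
Qed.


Definition subm {V : eqType} (S C : seq V) := forall z, (count_mem z S <= count_mem z C)%N.

Lemma subm_perm {V : eqType} (S C : seq V) : subm S C -> exists T, perm_eq C (S ++ T).
Proof.
elim: S C => [|z S IH] C h; first by exists C.
have hz : z \in C.
  by rewrite -has_pred1 has_count; apply: leq_trans (h z); rewrite /= eqxx.
have hr := perm_to_rem hz.
have [|T hT] := IH (rem z C).
  move=> y; have := h y; rewrite (permP hr) /=; lia.
exists T; by perm_tac.
Qed.

Lemma coll_count {V : eqType} (X : seq V) Ss T C :
  X \in Ss -> perm_eq C (flatten Ss ++ T) -> forall z, (count_mem z X <= count_mem z C)%N.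
Proof.
move=> hX h z; have h1 := perm_flatten (perm_to_rem hX).
rewrite (permP h) count_cat (permP h1) /= count_cat; lia.
Qed.

Lemma pair_replace {V : zmodType} (C C' R : seq V) p1 p2 q1 q2 (tw : V) m :
  (forall S, subm S C -> lsum S != tw) ->
  perm_eq C' (p1 :: p2 :: R) -> perm_eq C (q1 :: q2 :: R) ->
  p1 + p2 = q1 + q2 -> q1 - p1 = tw -> q2 - p2 = tw ->
  ZS C' m -> ZS C m.
Proof.
move=> hno hC' hC e12 e1 e2 [Ss [T [hs hok h]]].
have hC'' : perm_eq (p1 :: p2 :: R) (flatten Ss ++ T) by rewrite perm_sym in hC'; apply: perm_trans hC' h.
case: (boolP (has (fun X => (p1 \in X) && (p2 \in rem p1 X)) Ss)).
  case/hasP => X hX /andP [h1 h2].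
  have hX1 := perm_to_rem h1; have hX2 := perm_to_rem h2.
  set X'' := rem p2 (rem p1 X) in hX2.
  have hokX : okc X by apply: (allP hok).
  case/splitPr: hX hs hok h hC'' => Ss1 Ss2 hs hok h hC''.
  exists (Ss1 ++ (q1 :: q2 :: X'') :: Ss2), T; split.
  - by move: hs; rewrite !size_cat.
  - move: hok; rewrite !all_cat /= => /and3P [-> _ ->]; rewrite andbT /=.
    have eX : lsum X = q1 + q2 + lsum X''.
      move/lsum_perm: hX1 => ->; move/lsum_perm: hX2 => e3.
      by rewrite lsum_cons e3 lsum_cons addrA e12.
    by move: hokX; rewrite /okc eX !lsum_cons !addrA => /andP [].
  - by perm_tac.
move=> hno2.
have hcnt : forall X, X \in Ss -> forall z, (count_mem z X <= (p1 == z) + (p2 == z) + count_mem z R)%N.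
  move=> X hX z; have := coll_count hX h z; rewrite (permP hC') /=; lia.
case: (boolP (has (fun X => p1 \in X) Ss)).
  case/hasP => X hX h1; have hX1 := perm_to_rem h1.
  have h2 : p2 \notin rem p1 X.
    by apply: contra hno2 => h2; apply/hasP; exists X => //; rewrite h1.
  have eS : lsum (rem p1 X) = - p1.
    have : lsum X = 0 by have := allP hok X hX; case/andP => _ /eqP.
    move/lsum_perm: hX1 => ee; rewrite ee lsum_cons => e0.
    by rewrite -[lsum (rem p1 X)](addKr p1) e0 addr0.
  have := hno (q1 :: rem p1 X); rewrite lsum_cons eS e1 eqxx => hh; suff : false by []; apply: hh => z.
  have := hcnt X hX z; rewrite (permP hX1) (permP hC) /=.
  case: (eqVneq p2 z) => [<-|ne].
    by move/count_memPn: h2 => -> _; rewrite addn0 leq_addr.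
  rewrite /= addn0 leq_add2l => H; rewrite leq_add2l.
  exact: leq_trans H (leq_addl _ _).
move=> hno1.
case: (boolP (has (fun X => p2 \in X) Ss)).
  case/hasP => X hX h2; have hX2 := perm_to_rem h2.
  have h1 : p1 \notin rem p2 X.
    apply: contra hno1 => h1; apply/hasP; exists X => //.
    exact: (mem_rem h1).
  have eS : lsum (rem p2 X) = - p2.
    have : lsum X = 0 by have := allP hok X hX; case/andP => _ /eqP.
    move/lsum_perm: hX2 => ee; rewrite ee lsum_cons => e0.
    by rewrite -[lsum (rem p2 X)](addKr p2) e0 addr0.
  have := hno (q2 :: rem p2 X); rewrite lsum_cons eS e2 eqxx => hh; suff : false by []; apply: hh => z.
  have := hcnt X hX z; rewrite (permP hX2) (permP hC) /=.
  case: (eqVneq p1 z) => [<-|ne].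
    by move/count_memPn: h1 => -> _; rewrite addn0 addnCA leq_addr.
  rewrite /= add0n leq_add2l => H; rewrite addnCA leq_add2l.
  exact: leq_trans H (leq_addl _ _).
move=> hno3.
have n1 : p1 \notin flatten Ss.
  by apply/negP => /flattenP [X hX hx]; move/negP: hno1; apply; apply/hasP; exists X.
have n2 : p2 \notin flatten Ss.
  by apply/negP => /flattenP [X hX hx]; move/negP: hno3; apply; apply/hasP; exists X.
have : p1 \in flatten Ss ++ T by rewrite -(perm_mem hC'') mem_head.
rewrite mem_cat (negbTE n1) /= => t1.
have hT1 := perm_to_rem t1.
have hh : perm_eq (p2 :: R) (flatten Ss ++ rem p1 T) by perm_tac.
have : p2 \in flatten Ss ++ rem p1 T by rewrite -(perm_mem hh) mem_head.
rewrite mem_cat (negbTE n2) /= => t2.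
have hT2 := perm_to_rem t2.
exists Ss, (q1 :: q2 :: rem p2 (rem p1 T)); split => //.
by perm_tac.
Qed.


Lemma iter_merge {V : zmodType} (e : V) s : forall x R n,
  ZS (x :: nseq s e ++ R) (n + s) -> ZS ((x + e *+ s) :: R) n.
Proof.
elim: s => [|s IH] x R n.
  by rewrite addn0 mulr0n addr0.
rewrite addnS /= => h; have := merge h; move/IH.
by rewrite mulrS addrA.
Qed.

Lemma pm_decomp {V : zmodType} (e f : V) R : e != f ->
  perm_eq R (nseq (count_mem e R) e ++ nseq (count_mem f R) f ++
             filter (fun z => (z != e) && (z != f)) R).
Proof.
move=> nef; elim: R => [|z R IH] //=.
case: (eqVneq z e) => [->|ne] /=.
  by rewrite add0n (negbTE nef) /= perm_cons.
case: (eqVneq z f) => [->|nf] /=.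
  rewrite !add0n; rewrite -(perm_cons f) in IH; apply: (perm_trans IH).
  by rewrite (perm_catCA [:: f]).
rewrite !add0n; rewrite -(perm_cons z) in IH; apply: (perm_trans IH).
by rewrite (perm_catCA [:: z]) perm_cat2l (perm_catCA [:: z]).
Qed.

Lemma SS_pm {V : zmodType} (e : V) a b Q R w :
  perm_eq R (nseq a e ++ nseq b (- e) ++ Q) ->
  (SS R w <-> exists d : int, ((- (b%:Z) <= d) && (d <= a%:Z))%R /\ SS Q (w - e *~ d)).
Proof.
move=> hR.
have eq1 : SS R w <-> SS (nseq a e ++ nseq b (- e) ++ Q) w.
  split; apply: SS_perm => //; by rewrite perm_sym.
rewrite eq1 SS_nseq_cat; split.
  case=> i hi; rewrite SS_nseq_cat; case=> j hj h.
  exists (i%:Z - j%:Z); split; first by apply/andP; split; lia.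
  rewrite mulrzBr; suff -> : w - (e *~ i - e *~ j) = w - e *+ i - (- e) *+ j by [].
  by rewrite -!pmulrn mulNrn opprB opprK addrCA [RHS]addrC.
case=> d [hd h]; case: d hd h => [i|j] hd h.
  exists i; first by lia.
  rewrite SS_nseq_cat; exists 0%N => //.
  by rewrite mulr0n subr0 -pmulrn in h *.
exists 0%N => //; rewrite SS_nseq_cat; exists j.+1; first by lia.
by rewrite mulr0n subr0 mulNrn.
Qed.


Lemma uniq_flatten_enum (n : nat) (Fs : seq {set 'I_n}) :
  pairwise (fun A B : {set 'I_n} => [disjoint A & B]) Fs ->
  uniq (flatten [seq enum A | A : {set 'I_n} <- Fs]).
Proof.
elim: Fs => [|A Fs IH] //; rewrite pairwise_cons => /andP [hA hp] /=.
rewrite cat_uniq enum_uniq IH // andbT /=.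
apply/hasP => -[x /flattenP [l /mapP [B hB ->] hxB] hxA].
have := allP hA B hB; rewrite disjoint_subset => /subsetP /(_ x).
by rewrite !mem_enum in hxA hxB *; rewrite inE hxB => /(_ hxA).
Qed.

Lemma idx2list {V : zmodType} (C : seq V) (Fs : seq {set 'I_(size C)}) :
  pairwise (fun A B : {set 'I_(size C)} => [disjoint A & B]) Fs ->
  exists T, perm_eq C (flatten [seq [seq nth 0 C (val i) | i <- enum A] | A : {set 'I_(size C)} <- Fs] ++ T).
Proof.
move=> hp.
set U := [set i : 'I_(size C) | has (fun A : {set 'I_(size C)} => i \in A) Fs].
exists [seq nth 0 C (val i) | i <- enum (~: U)].
have eC : C = [seq nth 0 C (val i) | i <- enum 'I_(size C)].
  by rewrite (map_comp (nth 0 C) val) val_enum_ord; exact: (esym (mkseq_nth 0 C)).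
set E := flatten [seq enum A | A : {set 'I_(size C)} <- Fs] ++ enum (~: U).
have hE : perm_eq (enum 'I_(size C)) E.
  apply: uniq_perm; first exact: enum_uniq.
    rewrite cat_uniq uniq_flatten_enum // enum_uniq andbT /=.
    apply/hasP => -[x]; rewrite mem_enum inE => hx /flattenP [l /mapP [B hB ->]].
    rewrite mem_enum => hxB; move/negP: hx; apply; rewrite inE; apply/hasP; by exists B.
  move=> i; rewrite mem_enum inE mem_cat mem_enum inE.
  case: (boolP (i \in U)) => [|_]; last by rewrite orbT.
  rewrite inE => /hasP [B hB hiB]; apply/esym/orP; left.
  by apply/flattenP; exists (enum B); [apply/mapP; exists B | rewrite mem_enum].
have eqE : [seq nth 0 C (val i) | i <- E] =
    flatten [seq [seq nth 0 C (val i) | i <- enum A] | A : {set 'I_(size C)} <- Fs] ++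
    [seq nth 0 C (val i) | i <- enum (~: U)].
  by rewrite /E map_cat map_flatten; congr (_ ++ _); rewrite -map_comp.
by rewrite {1}eC -eqE; apply: perm_map.
Qed.

Lemma sum_setP {V : zmodType} (C : seq V) (P : seq nat) :
  uniq P -> all (fun x => (x < size C)%N) P ->
  \sum_(i in [set i : 'I_(size C) | val i \in P]) nth 0 C i = lsum [seq nth 0 C x | x <- P].
Proof.
elim: P => [|x P IH].
  by move=> _ _; rewrite /lsum big_nil; apply: big_pred0 => i; rewrite inE.
move=> /= /andP [hx hu] /andP [hlt ha].
rewrite (bigD1 (Ordinal hlt)) /=; last by rewrite inE mem_head.
rewrite lsum_cons -IH //; congr (_ + _); apply: eq_bigl => i; rewrite !inE.
rewrite -val_eqE /=; case: (eqVneq (val i) x) => [->|ne] /=.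
  by rewrite (negbTE hx).
by rewrite andbT.
Qed.

Lemma set_eq0P {V : zmodType} (C : seq V) (P : seq nat) :
  all (fun x => (x < size C)%N) P ->
  ([set i : 'I_(size C) | val i \in P] == set0) = (P == [::]).
Proof.
case: P => [|x P] /=.
  by move=> _; apply/eqP/setP => i; rewrite !inE.
case/andP => hlt _; apply/negP => /eqP e.
have : Ordinal hlt \in [set i : 'I_(size C) | val i \in x :: P] by rewrite inE mem_head.
by rewrite e in_set0.
Qed.

Lemma pairwise_sets (n : nat) (Ps : seq (seq nat)) : uniq (flatten Ps) ->
  pairwise (fun A B : {set 'I_n} => [disjoint A & B])
    [seq [set i : 'I_n | val i \in P] | P <- Ps].
Proof.
rewrite pairwise_map; elim: Ps => [|P Ps IH] //.
rewrite pairwise_cons /= cat_uniq => /and3P [_ hh hu]; rewrite IH // andbT.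
apply/allP => Q hQ; rewrite /= disjoint_subset; apply/subsetP => i; rewrite !inE => hiP.
apply/negP => hiQ; move/negP: hh; apply; apply/hasP; exists (val i) => //.
by apply/flattenP; exists Q.
Qed.

Lemma uniq_flatten_mem {T : eqType} (Ps : seq (seq T)) P :
  uniq (flatten Ps) -> P \in Ps -> uniq P.
Proof.
elim: Ps => //= Q Ps IH; rewrite cat_uniq => /and3P [hq _ hu].
by rewrite in_cons => /orP [/eqP -> // | hP]; apply: IH.
Qed.

Lemma list2idx {V : zmodType} (C : seq V) Ss T : perm_eq C (flatten Ss ++ T) ->
  exists Fs : seq {set 'I_(size C)}, [/\ size Fs = size Ss,
    pairwise (fun A B : {set 'I_(size C)} => [disjoint A & B]) Fs &
    forall j, (j < size Ss)%N ->
      (\sum_(i in nth set0 Fs j) nth 0 C i = lsum (nth [::] Ss j)) /\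
      ((nth set0 Fs j == set0) = (nth [::] Ss j == [::]))].
Proof.
rewrite perm_sym => h.
have [Is hIs e] := perm_iotaP 0 h.
set L := size (flatten Ss).
set Js := take L Is.
have hJ : [seq nth 0 C i | i <- Js] = flatten Ss by rewrite map_take -e take_size_cat.
have uJ : uniq Js by apply: take_uniq; rewrite (perm_uniq hIs) iota_uniq.
have aJ : all (fun x => (x < size C)%N) Js.
  apply/allP => x /mem_take; rewrite (perm_mem hIs) mem_iota /=; lia.
set Ps := reshape (shape Ss) Js.
have hP : [seq [seq nth 0 C i | i <- P] | P <- Ps] = Ss by rewrite map_reshape hJ flattenK.
have hfl : flatten Ps = Js.
  by apply: reshapeKr; rewrite size_take -size_flatten; apply: geq_minl.
have hsz : size Ps = size Ss by rewrite size_reshape size_map.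
exists [seq [set i : 'I_(size C) | val i \in P] | P <- Ps]; split.
- by rewrite size_map.
- by apply: pairwise_sets; rewrite hfl.
move=> j hj.
have hjP : (j < size Ps)%N by rewrite hsz.
have hPj : nth [::] Ss j = [seq nth 0 C i | i <- nth [::] Ps j] by rewrite -hP (nth_map [::]).
have hin : nth [::] Ps j \in Ps by apply: mem_nth.
have uP : uniq (nth [::] Ps j).
  by move: uJ; rewrite -hfl => /uniq_flatten_mem; apply.
have aP : all (fun x => (x < size C)%N) (nth [::] Ps j).
  apply/allP => x hx; apply: (allP aJ); rewrite -hfl; apply/flattenP; by exists (nth [::] Ps j).
rewrite (nth_map [::]) // hPj; split.
  exact: sum_setP.
by rewrite set_eq0P //; case: (nth [::] Ps j).
Qed.


Lemma pairwise_uniq {T : eqType} (r : rel T) (s : seq T) : uniq s ->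
  (forall x y, x \in s -> y \in s -> x != y -> r x y) -> pairwise r s.
Proof.
elim: s => [|x s IH] //; rewrite pairwise_cons /= => /andP [hx hu] h.
apply/andP; split.
  apply/allP => y hy; apply: h; [exact: mem_head | by rewrite in_cons hy orbT |].
  by apply/eqP => exy; move: hx; rewrite exy hy.
by apply: IH => // a b ha hb; apply: h; rewrite in_cons ?ha ?hb orbT.
Qed.

Lemma E1 k (C : seq (Res k)) x : x \in sumset C <-> SS C x.
Proof.
split.
  case/imsetP => I _ ->.
  have [|T h] := @idx2list _ C [:: I]; first by rewrite pairwise_cons.
  exists [seq nth 0 C (val i) | i <- enum I], T; split; first by move: h; rewrite /= cats0.
  by rewrite /lsum big_map big_enum.
case=> S [T [h ->]].
have h' : perm_eq C (flatten [:: S] ++ T) by rewrite /= cats0.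
have [Fs [hs _ hF]] := list2idx h'.
case: Fs hs hF => // I [] // _ hF.
apply/imsetP; exists I => //; by rewrite /sub_sum (hF 0%N erefl).1.
Qed.

Lemma E2 k (C : seq (Res k)) m : has_zero_sums C m <-> ZS C m.
Proof.
split.
  case=> F [hF hd].
  set Fs := [seq F j | j <- enum 'I_m].
  have hp : pairwise (fun A B : {set 'I_(size C)} => [disjoint A & B]) Fs.
    rewrite pairwise_map; apply: pairwise_uniq; first exact: enum_uniq.
    by move=> i j _ _ /hd.
  have [T h] := idx2list hp.
  exists [seq [seq nth 0 C (val i) | i <- enum A] | A : {set 'I_(size C)} <- Fs], T; split => //.
    by rewrite /Fs !size_map -enumT size_enum_ord.
  apply/allP => S /mapP [A /mapP [j _ ->] ->]; have [h1 h2] := hF j.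
  rewrite /okc; apply/andP; split.
    by rewrite -size_eq0 size_map -cardE cards_eq0.
  by rewrite /lsum big_map big_enum; apply/eqP.
case=> Ss [T [hs hok h]].
have [Fs [hsz hp hF]] := list2idx h.
exists (fun j : 'I_m => nth set0 Fs j); split.
  move=> j; have hj : (j < size Ss)%N by rewrite hs.
  have [e1 e2] := hF j hj.
  have /andP [n1 /eqP n2] : okc (nth [::] Ss j) by apply: (allP hok); apply: mem_nth.
  by rewrite e2 n1; split => //; rewrite /sub_sum e1.
move=> i j; move/(pairwiseP set0): hp => hP.
have hi : (i < size Fs)%N by rewrite hsz hs.
have hj : (j < size Fs)%N by rewrite hsz hs.
rewrite neq_ltn => /orP [] hij; first exact: hP.
by rewrite disjoint_sym; apply: hP.
Qed.

Lemma E3 k (C : seq (Res k)) :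
  (forall I : {set 'I_(size C)}, sub_sum I != twok k) ->
  forall S, subm S C -> lsum S != twok k.
Proof.
move=> hno S /subm_perm [T h].
have : lsum S \in sumset C by apply/E1; exists S, T.
by case/imsetP => I _ ->.
Qed.


Lemma zm1 (V : zmodType) (w P D X : V) : w + (P + X) - (D + X) = w + P - D.
Proof. by rewrite opprD (addrA w) addrACA subrr addr0. Qed.
Lemma zm2 (V : zmodType) (w P D : V) : w - (D - P) = w + P - D.
Proof. by rewrite opprB addrA. Qed.

Lemma KEY {V : zmodType} (e : V) a b Q R (p q : nat) w :
  perm_eq R (nseq a e ++ nseq b (- e) ++ Q) -> (p + q <= a + b + 1)%N ->
  SS R (w + e *~ p%:Z) -> SS R w \/ SS R (w + e *~ (p + q)%N%:Z).
Proof.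
move=> hR hpq; rewrite !(SS_pm _ hR) => -[d [hd h]].
case: (boolP (- (b%:Z) <= d - p%:Z)) => hdp.
  left; exists (d - p%:Z); split; first by apply/andP; split; lia.
  by rewrite mulrzBr zm2.
right; exists (d + q%:Z); split; first by apply/andP; split; lia.
by rewrite PoszD !mulrzDr zm1.
Qed.

Lemma N_gt1 k : (1 < 2 ^ k.+1)%N.
Proof. by rewrite expnS; have := expn_gt0 2 k; lia. Qed.

Lemma ResN0 k : ((2 ^ k.+1)%:R : Res k) = 0.
Proof. exact: pchar_Zp (N_gt1 k). Qed.

Lemma Res_val k (x : Res k) : x = (val x)%:R.
Proof. exact: (esym (natr_Zp x)). Qed.

Lemma Res_lt k (x : Res k) : (val x < 2 ^ k.+1)%N.
Proof. by apply: (leq_trans (ltn_ord x)); rewrite Zp_cast ?N_gt1. Qed.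

Lemma Res_valn k n : val (n%:R : Res k) = (n %% 2 ^ k.+1)%N.
Proof. exact: val_Zp_nat (N_gt1 k) n. Qed.

Lemma twok2 k : twok k + twok k = 0 :> Res k.
Proof. by rewrite /twok -natrD -(ResN0 k) expnS mul2n -addnn. Qed.

Lemma twok_neq0 k : (1 <= k)%N -> twok k != 0 :> Res k.
Proof.
move=> hk; apply/eqP => e; have := congr1 val e; rewrite /twok Res_valn /=.
rewrite modn_small; last by rewrite expnS; have := expn_gt0 2 k; lia.
by have := expn_gt0 2 k; lia.
Qed.

Lemma val_m1 k : val (-1 : Res k) = (2 ^ k.+1 - 1)%N.
Proof.
have e : (-1 : Res k) = (2 ^ k.+1 - 1)%:R.
  by apply/eqP; rewrite eq_sym -addr_eq0 natr1 subn1 prednK ?ResN0 // expn_gt0.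
by rewrite e Res_valn modn_small //; have := N_gt1 k; lia.
Qed.

Lemma val_1 k : val (1 : Res k) = 1%N.
Proof. by rewrite -[1]/(1%:R) Res_valn modn_small // N_gt1. Qed.

Lemma one_neq_m1 k : (1 <= k)%N -> (1 : Res k) != -1.
Proof.
move=> hk; apply/eqP => e; have := congr1 val e; rewrite val_1 val_m1.
by rewrite !expnS; have := expn_gt0 2 k.-1; case: k hk {e} => // k _ /=; rewrite expnS; lia.
Qed.

Lemma absR_pm1 k (x : Res k) : is_pm1 x -> absR x = 1%N.
Proof.
rewrite /is_pm1 /absR => /orP [] /eqP ->; rewrite ?val_1 ?val_m1; have := N_gt1 k; lia.
Qed.

Lemma sign1 k (t : Res k) : (1 < absR t)%N ->
  t = (if (1 <= val t < 2 ^ k)%N then 1 else -1) *+ absR t.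
Proof.
rewrite /absR => h; have hl := Res_lt t; have hr := Res_val t.
have e2 : (2 ^ k.+1 = 2 * 2 ^ k)%N by rewrite expnS.
have N0 := ResN0 k.
move: h hl hr; move: (val t) => v h hl ->.
case: ifP => hv.
  have -> : minn v (2 ^ k.+1 - v) = v by apply/minn_idPl; lia.
  by [].
have -> : minn v (2 ^ k.+1 - v) = (2 ^ k.+1 - v)%N.
  apply/minn_idPr; move: hv h; rewrite /minn; case: ifP; lia.
rewrite mulNrn; apply/eqP; rewrite -addr_eq0 -natrD subnKC //.
  by rewrite N0.
by lia.
Qed.


Lemma count_pm {V : zmodType} (e : V) (P : pred V) R : e != - e ->
  (forall z, P z = (z == e) || (z == - e)) ->
  (count_mem e R + count_mem (- e) R = count P R)%N.
Proof.
move=> hee hP; rewrite -count_predUI.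
rewrite (@eq_count _ (predI _ _) pred0); last first.
  move=> z /=; apply/negP => /andP [/eqP -> /eqP e1].
  by move/negP: hee; apply; rewrite {1}e1.
rewrite count_pred0 addn0; apply: eq_count => z /=; by rewrite hP.
Qed.

Lemma type1 k (hk : (1 <= k)%N) (C : seq (Res k)) t C' : compress1 C t C' ->
  sumset C' = sumset C /\
  (forall m, has_zero_sums C' (m + absR t - 1) -> has_zero_sums C m).
Proof.
case=> lam [[hl0 hlc] ht hs1 hsl hp].
have het := sign1 hs1.
move: hp het; set e := (if _ then 1 else -1) => hp het.
have hee : e != - e.
  rewrite /e; case: ifP => _; first exact: one_neq_m1.
  rewrite opprK eq_sym; exact: one_neq_m1.
have hpm : forall z, is_pm1 z = (z == e) || (z == - e).
  by move=> z; rewrite /is_pm1 /e; case: ifP => _ //; rewrite opprK orbC.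
have htpm : is_pm1 t = false by apply/negP => /absR_pm1; lia.
set s := absR t in hs1 hsl hp het *.
set R := rem t C.
have hC : perm_eq C (t :: R) := perm_to_rem ht.
have hCs : perm_eq (t :: R) C by rewrite perm_sym.
have hC' : perm_eq C' (nseq s e ++ R) by apply: (perm_trans hp); rewrite perm_catC.
have hab : (count_mem e R + count_mem (- e) R = count (@is_pm1 k) C)%N.
  by rewrite (permP hC) /= htpm add0n; apply: count_pm.
have hR := pm_decomp R hee.
move: hR hab; set a := count_mem e R; set b := count_mem (- e) R.
set Q := filter _ R => hR hab.
have hsab : (s <= a + b + 1)%N by lia.
have hC'd : perm_eq C' (nseq (s + a) e ++ nseq b (- e) ++ Q).
  by rewrite nseqD -catA; apply: (perm_trans hC'); rewrite perm_cat2l.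
split.
  apply/setP => y; apply/idP/idP => /E1 H; apply/E1.
    apply: (SS_perm hCs); apply/SS_cons.
    move: H; rewrite (SS_pm _ hC'd) => -[d [hd h]].
    case: (boolP (d <= a%:Z)) => hda.
      by left; rewrite (SS_pm _ hR); exists d; split => //; apply/andP; split; lia.
    right; rewrite (SS_pm _ hR); exists (d - s%:Z); split; first by apply/andP; split; lia.
    by rewrite het pmulrn mulrzBr opprB addrA subrK.
  rewrite (SS_pm _ hC'd).
  have := SS_perm hC H; case/SS_cons => h; move: h; rewrite (SS_pm _ hR) => -[d [hd h]].
    by exists d; split => //; apply/andP; split; lia.
  exists (d + s%:Z); split; first by apply/andP; split; lia.
  by move: h; rewrite het pmulrn mulrzDr opprD addrA addrAC.
move=> m /E2 H; apply/E2.
case: m H => [|n] H; first exact: ZS0.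
have [s' es] : exists s', s = s'.+1 by exists s.-1; lia.
have H1 : ZS (e :: nseq s' e ++ R) (n.+1 + s').
  have -> : (n.+1 + s')%N = (n.+1 + s - 1)%N by lia.
  by apply: ZS_perm H; move: hC'; rewrite es.
have := iter_merge H1; rewrite -mulrS -es -het => H2.
exact: ZS_perm hCs H2.
Qed.

Lemma type2 k (hk : (1 <= k)%N) (C : seq (Res k))
  (hno : forall S, subm S C -> lsum S != twok k) C' : compress2 C C' ->
  (sumset C' \subset sumset C) /\
  (forall m, has_zero_sums C' m -> has_zero_sums C m).
Proof.
case=> t [htin hcnt hp].
move: htin hcnt hp; set x := - t; set a := twok k - t => htin hcnt hp.
have hxa : x != a.
  apply/negP => /eqP ex; move/negP: (twok_neq0 hk); apply; apply/eqP.
  have -> : twok k = a + t by rewrite /a subrK.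
  by rewrite -ex /x addNr.
have ha : a \in C by rewrite -has_pred1 has_count; exact: (leq_trans _ hcnt).
have hC1 := perm_to_rem ha.
have ha2 : a \in rem a C.
  rewrite -has_pred1 has_count; move: hcnt; rewrite (permP hC1) /= eqxx add1n ltnS; exact.
have hC2 := perm_to_rem ha2.
have hx2 : x \in rem a (rem a C).
  have h1 : x \in rem a C by move: htin; rewrite (perm_mem hC1) in_cons (negbTE hxa).
  by move: h1; rewrite (perm_mem hC2) in_cons (negbTE hxa).
have hC3 := perm_to_rem hx2.
move: hC3; set R0 := rem x (rem a (rem a C)) => hC3.
have hC : perm_eq C (a :: a :: x :: R0).
  apply: (perm_trans hC1); rewrite perm_cons; apply: (perm_trans hC2); by rewrite perm_cons.
have hC' : perm_eq C' (x :: x :: x :: R0).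
  by apply: (perm_trans hp); rewrite perm_catC /= !perm_cons.
have e2 : a *+ 2 = x *+ 2.
  by rewrite /a /x mulrnBl mulr2n twok2 add0r mulNrn.
split.
  apply/subsetP => y /E1 H; apply/E1.
  have : SS (nseq 3 x ++ R0) y := SS_perm hC' H.
  case/SS_nseq_cat => i hi hR.
  have hCC : perm_eq (nseq 1 x ++ nseq 2 a ++ R0) C.
    rewrite perm_sym; apply: (perm_trans hC).
    by rewrite (perm_catCA [:: a; a] [:: x]).
  apply: (SS_perm hCC); apply/SS_nseq_cat.
  case: i hi hR => [|[|[|[|i]]]] hi hR //.
  - exists 0%N => //; apply/SS_nseq_cat; exists 0%N => //; by rewrite !mulr0n !subr0 in hR *.
  - exists 1%N => //; apply/SS_nseq_cat; exists 0%N => //; by rewrite mulr0n subr0.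
  - exists 0%N => //; apply/SS_nseq_cat; exists 2%N => //; by rewrite mulr0n subr0 e2.
  - exists 1%N => //; apply/SS_nseq_cat; exists 2%N => //.
    by rewrite e2 -addrA -opprD -mulrnDr.
move=> m /E2 H; apply/E2.
have e12 : x + x = a + a by rewrite -!mulr2n e2.
have e1 : a - x = twok k by rewrite /a /x opprK subrK.
exact: (pair_replace hno hC' hC e12 e1 e1 H).
Qed.

Lemma not_pm1_range k (hk : (1 <= k)%N) (u : Res k) : in_range3 u -> is_pm1 u = false.
Proof.
move=> /andP [h1 h2]; apply/negP; rewrite /is_pm1 => /orP [] /eqP e;
  have := congr1 val e; rewrite ?val_1 ?val_m1 => ev; rewrite ev in h1 h2.
  have : (1 <= 2 ^ k.-1)%N by rewrite expn_gt0.
  lia.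
have e2 : (2 ^ k.+1 = 2 * 2 ^ k)%N by rewrite expnS.
have : (1 <= 2 ^ k)%N by rewrite expn_gt0.
lia.
Qed.

Lemma range_bound k (hk : (1 <= k)%N) (u : Res k) : in_range3 u ->
  (val u <= 2 ^ k)%N /\ (2 * (2 ^ k - val u) <= 2 ^ k.-1)%N.
Proof.
move=> /andP [h1 h2].
have e2 : (2 ^ k = 2 * 2 ^ k.-1)%N by rewrite -expnS prednK.
have : (1 <= 2 ^ k.-1)%N by rewrite expn_gt0.
split; lia.
Qed.

Lemma u_shift k (u : Res k) : (val u <= 2 ^ k)%N ->
  u - twok k = - ((2 ^ k - val u)%N%:R).
Proof.
move=> h; have e : (twok k : Res k) = (val u)%:R + (2 ^ k - val u)%N%:R.
  by rewrite /twok -natrD subnKC.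
by rewrite e {1}(Res_val u) opprD addrA subrr add0r.
Qed.

Lemma type3 k (hk : (1 <= k)%N) (C : seq (Res k))
  (hno : forall S, subm S C -> lsum S != twok k) C' : compress3 C C' ->
  (sumset C' \subset sumset C) /\
  (forall m, has_zero_sums C' m -> has_zero_sums C m).
Proof.
case=> u [v [hcnt [hu hv] hr3u hr3v hp]].
have hC : perm_eq C (u :: v :: rem v (rem u C)).
  apply: (perm_trans (perm_to_rem hu)); rewrite perm_cons; exact: perm_to_rem hv.
move: hC hp; set R := rem v (rem u C); set u' := u - twok k; set v' := v - twok k.
move=> hC hp.
have hC' : perm_eq C' (u' :: v' :: R) by apply: (perm_trans hp); rewrite perm_catC.
have euv : u' + v' = u + v by rewrite /u' /v' addrACA -opprD twok2 subr0.
split; last first.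
  move=> m /E2 H; apply/E2.
  have e1 : u - u' = twok k by rewrite /u' opprB addrC subrK.
  have e2 : v - v' = twok k by rewrite /v' opprB addrC subrK.
  exact: (pair_replace hno hC' hC euv e1 e2 H).
have hee := one_neq_m1 hk.
have hpm : forall z : Res k, is_pm1 z = (z == 1) || (z == - 1) by [].
have hab : (count_mem (1%R : Res k) R + count_mem ((- 1)%R : Res k) R = count (@is_pm1 k) C)%N.
  rewrite (permP hC) /= !not_pm1_range // !add0n; exact: count_pm.
have hR := pm_decomp R hee.
move: hR hab; set a := count_mem (1%R : Res k) R; set b := count_mem ((- 1)%R : Res k) R.
set Q := filter _ R => hR hab.
have [bu1 bu2] := range_bound hk hr3u.
have [bv1 bv2] := range_bound hk hr3v.
set pu := (2 ^ k - val u)%N in bu2; set pv := (2 ^ k - val v)%N in bv2.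
have eu : u' = - (1 *~ pu%:Z) by rewrite /u' u_shift.
have ev : v' = - (1 *~ pv%:Z) by rewrite /v' u_shift.
have hpq : (pu + pv <= a + b + 1)%N by lia.
have hqp : (pv + pu <= a + b + 1)%N by lia.
have eyuv : forall y, y - u - v = y + 1 *~ (pu + pv)%N%:Z.
  by move=> y; rewrite -addrA -opprD -euv eu ev -opprD opprK PoszD mulrzDr.
have eyvu : forall y, y - u - v = y + 1 *~ (pv + pu)%N%:Z.
  by move=> y; rewrite addnC.
have hCs : perm_eq (u :: v :: R) C by rewrite perm_sym.
apply/subsetP => y /E1 H; apply/E1.
have H1 := SS_perm hC' H; apply: (SS_perm hCs).
have fin : SS R y \/ SS R (y - u - v) -> SS (u :: v :: R) y.
  case=> h; apply/SS_cons; [left; apply/SS_cons; left | right; apply/SS_cons; right] => //.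
move: H1; rewrite SS_cons SS_cons SS_cons => -[[h|h]|[h|h]]; apply: fin.
- by left.
- move: h; rewrite ev opprK => h; rewrite eyvu; exact: KEY hR hqp h.
- move: h; rewrite eu opprK => h; rewrite eyuv; exact: KEY hR hpq h.
- by right; move: h; rewrite -addrA -opprD euv opprD addrA.
Qed.


Unset Implicit Arguments.

Theorem lemma3p5 (k : nat) (hk : (1 <= k)%N) (C : seq (Res k))
  (hnz : all (fun x => x != 0) C)
  (hno : forall I : {set 'I_(size C)}, sub_sum I != twok k) :
  (forall (t : Res k) (C' : seq (Res k)), compress1 C t C' ->
     sumset C' = sumset C /\
     (forall m : nat, has_zero_sums C' (m + absR t - 1) -> has_zero_sums C m)) /\
  (forall C' : seq (Res k), compress2 C C' ->
     (sumset C' \subset sumset C) /\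
     (forall m : nat, has_zero_sums C' m -> has_zero_sums C m)) /\
  (forall C' : seq (Res k), compress3 C C' ->
     (sumset C' \subset sumset C) /\
     (forall m : nat, has_zero_sums C' m -> has_zero_sums C m)).
Proof.
have hno' := E3 hno.
split; first by move=> t C' h; have := type1 hk h.
split => C' h; [have := type2 hk hno' h | have := type3 hk hno' h] => //.
Qed.
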